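(* Let $G=(V,E)$ be a finite undirected graph, let $k>2$ be an integer, let $C$ be a legitimate configuration (as defined in the context), and let $s\in S(C)$. Then for every node $u\in V$ with $\mathrm{dist}(u,s)\le\lfloor k/2\rfloor$, we have $d_u=\mathrm{dist}(u,s)$.
   Context: $\mathrm{dist}$ is the graph distance in $G$ and $N(u)$ the neighbourhood of $u$. Let $m=\lfloor k/2\rfloor$. A configuration $C$ assigns to each node $u$ the values $d_u\in\{0,\dots,k-1\}$, $err_u\in\{0,1\}$, and for each $i\in\{1,\dots,m-1\}$ a clock value $c_{i,u}\in\mathbb{Z}/4\mathbb{Z}$ and an arrow $b_{i,u}\in\{\uparrow,\downarrow\}$. Let $S(C)=\{u\in V: d_u=0\}$. Predicates on a node $u$: - $\mathrm{well\_defined}(u)$: $err_u=0$, $|d_u-d_v|\le 1$ for all $v\in N(u)$, and if $d_u>0$ then some $v\in N(u)$ has $d_v=d_u-1$. - $\mathrm{leader\_down}(u)$: if $d_u=0$ then $b_{i,u}=\downarrow$ for all $i\in\{1,\dots,m-1\}$. - $\mathrm{bc\_up}(u,i)$: for every $v\in N(u)$ with $d_v=d_u-1$, $(b_{i,u},b_{i,v},c_{i,v})\in\{(\uparrow,\uparrow,c_{i,u}),(\uparrow,\downarrow,c_{i,u}),(\uparrow,\downarrow,c_{i,u}+1),(\downarrow,\downarrow,c_{i,u})\}$. - $\mathrm{bc\_down}(u,i)$: for every $v\in N(u)$ with $d_v=d_u+1$, $(b_{i,u},b_{i,v},c_{i,v})\in\{(\uparrow,\uparrow,c_{i,u}),(\downarrow,\uparrow,c_{i,u}),(\downarrow,\uparrow,c_{i,u}-1),(\downarrow,\downarrow,c_{i,u})\}$.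 - $\mathrm{branch\_coherence}(u)$: either $d_u\ge m$, or ($\mathrm{bc\_up}(u,d_u)$ holds, and $\mathrm{bc\_up}(u,i)$ and $\mathrm{bc\_down}(u,i)$ hold for all $i\in\{d_u+1,\dots,m-1\}$). (For $d_u=0$ the condition $\mathrm{bc\_up}(u,0)$ is vacuous.) Clock arithmetic is in $\mathbb{Z}/4\mathbb{Z}$. A configuration $C$ is legitimate if every node $u$ satisfies $\mathrm{well\_defined}(u)$, $\mathrm{leader\_down}(u)$ and $\mathrm{branch\_coherence}(u)$, and any two distinct nodes of $S(C)$ are at distance at least $k$ in $G$. *)

(* Defs.v *)
From mathcomp Require Import all_boot all_algebra.
Set Implicit Arguments. Unset Strict Implicit. Unset Printing Implicit Defensive.
Import GRing.Theory.

Section Graph.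
Variable T : finType.
Variable e : rel T.

Definition simple_graph := symmetric e /\ irreflexive e.

Fixpoint within (n : nat) (u v : T) : bool :=
  match n with
  | 0 => u == v
  | n'.+1 => within n' u v || [exists w, e u w && within n' w v]
  end.

(* graph distance: Some n with n the length of a shortest path,
   None (= infinity) if v is not reachable from u.  A shortest path
   has length < #|T|, so searching lengths 0 .. #|T|-1 suffices. *)
Definition dist (u v : T) : option nat :=
  let i := find (fun n => within n u v) (iota 0 #|T|) in
  if i < #|T| then Some i else None.
End Graph.

(* A configuration for parameter k.  Clocks and arrows are given for all
   indices i : nat; only the indices 1 <= i <= m-1 are ever inspected.
   Arrows: true = up, false = down. *)
Record config (T : finType) (k : nat) := Config {
  dv  : T -> 'I_k;
  err : T -> bool;
  clk : nat -> T -> 'Z_4;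
  arr : nat -> T -> bool
}.

Section Predicates.
Variables (T : finType) (e : rel T) (k : nat) (C : config T k).

Definition mpar := k./2.
Local Notation d u := (nat_of_ord (dv C u)).
Local Notation b i u := (arr C i u).
Local Notation c i u := (clk C i u).

Definition S_set : {set T} := [set u | d u == 0].

Definition well_defined (u : T) : Prop :=
  err C u = false /\
  (forall v, e u v -> d u <= d v + 1 /\ d v <= d u + 1) /\
  (0 < d u -> exists v, e u v /\ d v + 1 = d u).

Definition leader_down (u : T) : Prop :=
  d u = 0 -> forall i, 1 <= i <= mpar - 1 -> b i u = false.

Definition bc_up (u : T) (i : nat) : Prop :=
  forall v, e u v -> d v + 1 = d u ->
    [|| [&& b i u, b i v & c i v == c i u],
        [&& b i u, ~~ b i v & c i v == c i u],
        [&& b i u, ~~ b i v & c i v == (c i u + 1)%R]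
      | [&& ~~ b i u, ~~ b i v & c i v == c i u]].

Definition bc_down (u : T) (i : nat) : Prop :=
  forall v, e u v -> d v = d u + 1 ->
    [|| [&& b i u, b i v & c i v == c i u],
        [&& ~~ b i u, b i v & c i v == c i u],
        [&& ~~ b i u, b i v & c i v == (c i u - 1)%R]
      | [&& ~~ b i u, ~~ b i v & c i v == c i u]].

Definition branch_coherence (u : T) : Prop :=
  mpar <= d u \/
  (bc_up u (d u) /\
   forall i, d u + 1 <= i <= mpar - 1 -> bc_up u i /\ bc_down u i).

Definition legitimate : Prop :=
  (forall u, well_defined u /\ leader_down u /\ branch_coherence u) /\
  (forall s1 s2, s1 \in S_set -> s2 \in S_set -> s1 <> s2 ->
     forall n, dist e s1 s2 = Some n -> k <= n).
End Predicates.

(* Main.v *)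
Require Import Defs.
From mathcomp Require Import all_boot all_algebra.
From mathcomp Require Import zify.
Set Implicit Arguments. Unset Strict Implicit.

Section Aux.
Variables (T : finType) (e : rel T).

Lemma within_S n u v : within e n u v -> within e n.+1 u v.
Proof. by move=> h /=; rewrite h. Qed.

Lemma within_mono n m u v : n <= m -> within e n u v -> within e m u v.
Proof.
move=> /subnK <-; elim: (m - n) => [|p IH] // h.
by rewrite addSn; apply: within_S; apply: IH.
Qed.

Lemma within_cat a b u w v :
  within e a u w -> within e b w v -> within e (a + b) u v.
Proof.
elim: a u => [|a IH] u /=.
  by move/eqP => ->.
case/orP => [h1 h2|/existsP [x /andP [hx h1]] h2].
  by apply: within_S; apply: IH.
rewrite /=; apply/orP; right; apply/existsP; exists x.
by rewrite hx (IH _ h1 h2).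
Qed.

Lemma within1 u v : e u v -> within e 1 u v.
Proof. move=> h /=; apply/orP; right; apply/existsP; exists v; by rewrite h /=. Qed.

Lemma within_sym : symmetric e -> forall n u v, within e n u v -> within e n v u.
Proof.
move=> sym; elim => [|n IH] u v /=.
  by move/eqP => ->.
case/orP => [h|/existsP [x /andP [hx h]]].
  by rewrite (IH _ _ h).
have hxu : e x u by rewrite sym.
by have := within_cat (IH _ _ h) (within1 hxu); rewrite addn1.
Qed.

Lemma within_last n u v :
  within e n.+1 u v -> within e n u v \/ exists w, within e n u w /\ e w v.
Proof.
elim: n u => [|n IH] u /=.
  case/orP => [h|/existsP [x /andP [hx /eqP h]]]; first by left.
  by right; exists u; subst; split.
case/orP => [/orP [h|h]|/existsP [x /andP [hx h]]].
- by left; rewrite h.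
- by left; rewrite h orbT.
case: (IH _ h) => [h'|[w [hw hwv]]].
  by left; apply/orP; right; apply/existsP; exists x; rewrite hx h'.
right; exists w; split => //; apply/orP; right; apply/existsP; exists x.
by rewrite hx hw.
Qed.

Definition R u n : {set T} := [set v | within e n u v].

Lemma R_sub u n : R u n \subset R u n.+1.
Proof. by apply/subsetP => v; rewrite !inE; apply: within_S. Qed.

Lemma R_stab u n : R u n = R u n.+1 -> forall m, n <= m -> R u m = R u n.
Proof.
move=> H m /subnK <-; elim: (m - n) => [|p IH] //.
rewrite addSn; apply/setP => v; rewrite -IH !inE.
apply/idP/idP; last by apply: within_S.
case/within_last => [//|[w [hw hwv]]].
have : w \in R u (p + n) by rewrite inE.
rewrite IH inE => hw'.
have : v \in R u n.+1 by rewrite inE -addn1; apply: within_cat hw' (within1 hwv).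
by rewrite -H -IH inE.
Qed.

Lemma R_grow u n : n.+1 <= #|R u n| \/ exists j, j <= n /\ R u j = R u j.+1.
Proof.
elim: n => [|n [IH|[j [hj hR]]]].
- left; rewrite card_gt0; apply/set0Pn; exists u; by rewrite inE /=.
- case: (eqVneq (R u n) (R u n.+1)) => h.
    by right; exists n.
  left; have: R u n \proper R u n.+1 by rewrite properEneq h R_sub.
  by move/proper_card => h2; apply: leq_ltn_trans h2.
- by right; exists j; split => //; apply: leqW.
Qed.

Lemma within_short L u v :
  within e L u v -> within e (#|T|.-1) u v.
Proof.
move=> h.
case: (leqP L (#|T|.-1)) => hL; first exact: within_mono h.
case: (R_grow u (#|T|.-1)) => [hc|[j [hj hR]]].
  have hT : 0 < #|T| by apply/card_gt0P; exists u.
  have: R u #|T|.-1 = setT.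
    apply/eqP; rewrite eqEcard subsetT cardsT; by rewrite prednK in hc.
  by move/setP/(_ v); rewrite !inE.
have : v \in R u L by rewrite inE.
rewrite (R_stab hR (m := L)); last by apply: leq_trans hj (ltnW hL).
by rewrite inE; apply: within_mono.
Qed.

Lemma dist_Some u v n : dist e u v = Some n ->
  within e n u v /\ forall j, j < n -> ~~ within e j u v.
Proof.
rewrite /dist; set p := (fun n => within e n u v).
case: ifP => // hi [<-]; split.
  have := @nth_find _ 0 p (iota 0 #|T|).
  rewrite has_find size_iota nth_iota // => /(_ hi); by rewrite add0n.
move=> j hj; have := @before_find _ 0 p (iota 0 #|T|) j hj.
rewrite nth_iota ?add0n; first by rewrite /p => ->.
apply: ltn_trans hj hi.
Qed.

Lemma dist_le L u v : within e L u v -> exists m, dist e u v = Some m /\ m <= L.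
Proof.
move=> h.
have [M [hM [hML hMT]]] : exists M, within e M u v /\ M <= L /\ M <= #|T|.-1.
  case: (leqP L #|T|.-1) => hl; first by exists L.
  exists #|T|.-1; split; [exact: within_short h | split => //; exact: ltnW].
have hT : 0 < #|T| by apply/card_gt0P; exists u.
set p := (fun n => within e n u v).
have hf : find p (iota 0 #|T|) <= M.
  rewrite leqNgt; apply/negP => hlt.
  have := @before_find _ 0 p (iota 0 #|T|) M hlt.
  rewrite nth_iota ?add0n; first by rewrite /p hM.
  lia.
exists (find p (iota 0 #|T|)); split.
  rewrite /dist -/p ifT //; lia.
lia.
Qed.

End Aux.

Theorem lemma2 (T : finType) (e : rel T) (k : nat) (C : config T k) :
  simple_graph e -> 2 < k -> legitimate e C ->
  forall s, s \in S_set C ->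
  forall u n, dist e u s = Some n -> n <= k./2 ->
  nat_of_ord (dv C u) = n.
Proof.
move=> [sym irr] _ [Hall Hdist] s hs u n hd hn.
have WD : forall x, well_defined e C x by move=> x; case: (Hall x).
have A : forall m x y, within e m x y -> dv C x <= dv C y + m.
  elim => [|m IH] x y /=.
    by move/eqP => ->; rewrite addn0.
  case/orP => [h|/existsP [w /andP [hw h]]].
    by have := IH _ _ h; lia.
  have := IH _ _ h; case: (WD x) => _ [H _]; case: (H w hw); lia.
have B : forall x, exists s', dv C s' = 0 :> nat /\ within e (dv C x) x s'.
  move=> x; move Em: (nat_of_ord (dv C x)) => m.
  elim: m x Em => [|m IH] x Em.
    by exists x; split => //=.
  case: (WD x) => _ [_ H]; case: (H ltac:(lia)) => v [hv hv'].
  case: (IH v ltac:(lia)) => s' [h1 h2]; exists s'; split; first exact: h1.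
  exact: (within_cat (within1 hv) h2).
case: (dist_Some hd) => hw hmin.
have hs0 : nat_of_ord (dv C s) = 0 by move: hs; rewrite inE => /eqP.
have h1 := A _ _ _ hw; rewrite hs0 add0n in h1.
apply/eqP; rewrite eqn_leq h1 /= leqNgt; apply/negP => hlt.
case: (B u) => s' [hs'0 hus'].
case: (eqVneq s s') => [eq|neq].
  by subst s'; move: (hmin _ hlt); rewrite hus'.
have := within_cat (within_sym sym hw) hus'.
case/dist_le => m [hm hmle].
have := Hdist s s' hs ltac:(by rewrite inE hs'0) ltac:(by apply/eqP) m hm.
have := odd_double_half k; lia.
Qed.
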